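(* Let $C_0>0$, $C_1\ge0$, $p>1$, $q>1$ and $t_0\ge2$, and let $\Phi$ be a real-valued differentiable function on $[t_0,\infty)$ satisfying $$\frac{d\Phi}{dt}(t)\le-\frac{C_0}{t}|\Phi(t)|^p+\frac{C_1}{t^q},\qquad t\ge t_0.$$ Then $$\Phi(t)\le\frac{C_2}{(\log t)^{p^*-1}},\qquad t\ge t_0,$$ where $p^*$ is the H\''older conjugate of $p$ (i.e. $1/p+1/p^*=1$) and $$C_2=\frac1{\log2}\Bigl((\log t_0)^{p^*}\Phi(t_0)+C_1\int_2^\infty\frac{(\log\tau)^{p^*}}{\tau^q}d\tau\Bigr)+\Bigl(\frac{p^*}{C_0p}\Bigr)^{p^*-1}.$$ *)

(* Defs.v *)
From Stdlib Require Import Reals.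
From Coquelicot Require Import Coquelicot.
Open Scope R_scope.

(* x^y for x >= 0 with the convention 0^y = 0 (y > 0 in all uses). *)
Definition rpow (x y : R) : R :=
  if Req_EM_T x 0 then 0 else Rpower x y.

(* f has derivative l at t relative to the domain [t0, +oo)
   (one-sided at the endpoint t = t0). *)
Definition has_deriv_on_ge (t0 : R) (f : R -> R) (t l : R) : Prop :=
  filterlim (fun s => (f s - f t) / (s - t))
    (within (fun s => t0 <= s /\ s <> t) (locally t)) (locally l).

(* Main.v *)
Require Import Defs.
From Stdlib Require Import Reals Lra Psatz.
From Coquelicot Require Import Coquelicot.
Open Scope R_scope.

Lemma rpow_pos (x y : R) : 0 < x -> rpow x y = exp (y * ln x).
Proof. intros H; unfold rpow; destruct (Req_EM_T x 0); [lra|reflexivity]. Qed.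

Lemma rpow_ge0 (x y : R) : 0 <= rpow x y.
Proof. unfold rpow; destruct (Req_EM_T x 0); [lra|unfold Rpower; left; apply exp_pos]. Qed.

Lemma exp_le_mono (a b : R) : a <= b -> exp a <= exp b.
Proof. intros [H|H]; [left; apply exp_increasing; exact H| subst; lra]. Qed.

Lemma exp_convex (l X Y : R) : 0 < l < 1 ->
  exp (l * X + (1 - l) * Y) <= l * exp X + (1 - l) * exp Y.
Proof.
  intros Hl. set (m := l * X + (1 - l) * Y).
  assert (h1 : exp m * (1 + (X - m)) <= exp X).
  { replace X with (m + (X - m)) at 2 by ring. rewrite exp_plus.
    apply Rmult_le_compat_l; [left; apply exp_pos| apply exp_ineq1_le]. }
  assert (h2 : exp m * (1 + (Y - m)) <= exp Y).
  { replace Y with (m + (Y - m)) at 2 by ring. rewrite exp_plus.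
    apply Rmult_le_compat_l; [left; apply exp_pos| apply exp_ineq1_le]. }
  assert (e : l * (exp m * (1 + (X - m))) + (1 - l) * (exp m * (1 + (Y - m))) = exp m).
  { unfold m; ring. }
  assert (l * (exp m * (1 + (X - m))) <= l * exp X) by (apply Rmult_le_compat_l; lra).
  assert ((1-l) * (exp m * (1 + (Y - m))) <= (1-l) * exp Y) by (apply Rmult_le_compat_l; lra).
  lra.
Qed.

Lemma mono_dec (f df : R -> R) (a b : R) : a <= b ->
  (forall x, a < x < b -> is_derive f x (df x)) ->
  (forall x, a <= x <= b -> continuity_pt f x) ->
  (forall x, a <= x <= b -> df x <= 0) -> f b <= f a.
Proof.
  intros Hab Hd Hc Hs.
  destruct (MVT_gen f a b df) as [c [Hc1 Hc2]].
  - rewrite Rmin_left, Rmax_right by lra. exact Hd.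
  - rewrite Rmin_left, Rmax_right by lra. exact Hc.
  - rewrite Rmin_left, Rmax_right in Hc1 by lra.
    assert (df c * (b - a) <= 0).
    { apply Rmult_le_0_r; [apply Hs; lra| lra]. }
    lra.
Qed.

Lemma deriv_int (t0 : R) (Phi : R -> R) (x l : R) : t0 < x ->
  has_deriv_on_ge t0 Phi x l -> is_derive (fun y => Phi (Rmax t0 y)) x l.
Proof.
  intros Hx H. apply is_derive_Reals. intros eps Heps.
  destruct (H (ball l eps) (locally_ball l (mkposreal eps Heps))) as [d Hd].
  assert (Hd0 : 0 < Rmin d (x - t0)) by (apply Rmin_pos; [apply cond_pos|lra]).
  exists (mkposreal _ Hd0). intros h Hh0 Hh. simpl in Hh.
  assert (Hh1 : Rabs h < d) by (eapply Rlt_le_trans; [exact Hh| apply Rmin_l]).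
  assert (Hh2 : Rabs h < x - t0) by (eapply Rlt_le_trans; [exact Hh| apply Rmin_r]).
  assert (Hb : ball x d (x + h)).
  { unfold ball; simpl; unfold AbsRing_ball, abs, minus, plus, opp; simpl.
    replace (x + h + - x) with h by ring. exact Hh1. }
  specialize (Hd (x + h) Hb).
  assert (Ht : t0 <= x + h /\ x + h <> x).
  { split; [|lra]. pose proof (Rabs_def2 _ _ Hh2). lra. }
  specialize (Hd Ht).
  unfold ball in Hd; simpl in Hd; unfold AbsRing_ball, abs, minus, plus, opp in Hd; simpl in Hd.
  rewrite Rmax_right by (pose proof (Rabs_def2 _ _ Hh2); lra).
  rewrite Rmax_right by lra.
  replace (x + h - x) with h in Hd by ring. exact Hd.
Qed.

Lemma cont_t0 (t0 : R) (Phi : R -> R) (l : R) :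
  has_deriv_on_ge t0 Phi t0 l -> continuity_pt (fun y => Phi (Rmax t0 y)) t0.
Proof.
  intros H. intros eps Heps.
  destruct (H (ball l 1) (locally_ball l (mkposreal 1 Rlt_0_1))) as [d Hd].
  assert (Hk : 0 < Rabs l + 1) by (pose proof (Rabs_pos l); lra).
  exists (Rmin d (eps / (Rabs l + 1))). split.
  - apply Rmin_pos; [apply cond_pos| apply Rdiv_lt_0_compat; lra].
  - intros y [_ Hy]. simpl in Hy. unfold R_dist in Hy. simpl. unfold R_dist.
    rewrite (Rmax_left t0 t0) by lra.
    destruct (Rle_or_lt y t0) as [Hle|Hlt].
    + rewrite Rmax_left by lra. rewrite Rminus_diag, Rabs_R0. exact Heps.
    + rewrite Rmax_right by lra.
      assert (Hy1 : Rabs (y - t0) < d) by (eapply Rlt_le_trans; [exact Hy| apply Rmin_l]).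
      assert (Hy2 : Rabs (y - t0) < eps / (Rabs l + 1)) by (eapply Rlt_le_trans; [exact Hy| apply Rmin_r]).
      assert (Hb : ball t0 d y).
      { unfold ball; simpl; unfold AbsRing_ball, abs, minus, plus, opp; simpl. exact Hy1. }
      specialize (Hd y Hb (conj (Rlt_le _ _ Hlt) (Rgt_not_eq _ _ Hlt))).
      unfold ball in Hd; simpl in Hd; unfold AbsRing_ball, abs, minus, plus, opp in Hd; simpl in Hd.
      set (qq := (Phi y - Phi t0) / (y - t0)) in Hd.
      assert (Hq : Rabs qq < Rabs l + 1).
      { pose proof (Rabs_triang_inv qq l). unfold Rminus in *. lra. }
      assert (E : Phi y - Phi t0 = qq * (y - t0)) by (unfold qq; field; lra).
      rewrite E, Rabs_mult.
      rewrite (Rabs_right (y - t0)) in Hy2 by lra.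
      rewrite (Rabs_right (y - t0)) by lra.
      apply Rle_lt_trans with ((Rabs l + 1) * (y - t0)).
      * apply Rmult_le_compat_r; [lra| left; exact Hq].
      * apply Rmult_lt_reg_r with (/ (Rabs l + 1)). apply Rinv_0_lt_compat; lra.
        replace ((Rabs l + 1) * (y - t0) * / (Rabs l + 1)) with (y - t0) by (field; lra).
        exact Hy2.
Qed.
Lemma young (C0 p s u x : R) : 0 < C0 -> 1 < p -> s = p / (p - 1) -> 0 < u ->
  s * exp (s * ln u) * / u * x - C0 * exp (s * ln u) * rpow (Rabs x) p
  <= rpow (s / (C0 * p)) (s - 1).
Proof.
  intros HC0 Hp Hs Hu.
  assert (hs1 : 1 < s).
  { rewrite Hs. replace (p / (p - 1)) with (1 + 1 / (p - 1)) by (field; lra).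
    assert (0 < 1 / (p - 1)) by (apply Rdiv_lt_0_compat; lra). lra. }
  assert (ha : 0 < s / (C0 * p)) by (apply Rdiv_lt_0_compat; [lra| apply Rmult_lt_0_compat; lra]).
  rewrite (rpow_pos _ _ ha).
  assert (hE : 0 < exp (s * ln u)) by apply exp_pos.
  destruct (Rle_or_lt x 0) as [Hx|Hx].
  - assert (h1 : 0 < s * exp (s * ln u) * / u).
    { apply Rmult_lt_0_compat; [apply Rmult_lt_0_compat; lra| apply Rinv_0_lt_compat; lra]. }
    assert (h2 : s * exp (s * ln u) * / u * x <= 0) by nra.
    assert (h3 : 0 <= C0 * exp (s * ln u) * rpow (Rabs x) p).
    { apply Rmult_le_pos; [apply Rmult_le_pos; lra| apply rpow_ge0]. }
    pose proof (exp_pos ((s - 1) * ln (s / (C0 * p)))). lra.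
  - rewrite Rabs_right by lra. rewrite (rpow_pos _ _ Hx).
    set (eta := ln u). set (xi := ln x). set (la := ln (s / (C0 * p))).
    assert (e1 : exp (s * eta) * / u * x = exp ((s - 1) * eta + xi)).
    { replace ((s - 1) * eta + xi) with (s * eta + (- eta + xi)) by ring.
      rewrite exp_plus, exp_plus, exp_Ropp. unfold eta, xi. rewrite !exp_ln by lra. ring. }
    set (X := p * xi + s * eta - la). set (Y := (s - 1) * la).
    assert (hl : 0 < / p < 1).
    { split; [apply Rinv_0_lt_compat; lra|]. rewrite <- Rinv_1. apply Rinv_lt_contravar; lra. }
    pose proof (exp_convex (/ p) X Y hl) as hc.
    assert (e2 : / p * X + (1 - / p) * Y = (s - 1) * eta + xi).
    { unfold X, Y. rewrite Hs. field. lra. }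
    assert (e3 : exp X = exp (p * xi) * exp (s * eta) * (C0 * p / s)).
    { unfold X. replace (p * xi + s * eta - la) with (p * xi + s * eta + - la) by ring.
      rewrite exp_plus, exp_plus, exp_Ropp. unfold la. rewrite exp_ln by exact ha.
      field. split; lra. }
    rewrite e2, e3 in hc.
    replace (s * exp (s * eta) * / u * x) with (s * (exp (s * eta) * / u * x)) by ring.
    rewrite e1.
    assert (h4 : s * exp ((s - 1) * eta + xi) <=
                 s * (/ p * (exp (p * xi) * exp (s * eta) * (C0 * p / s)) + (1 - / p) * exp Y))
      by (apply Rmult_le_compat_l; lra).
    assert (e4 : s * (/ p * (exp (p * xi) * exp (s * eta) * (C0 * p / s)) + (1 - / p) * exp Y)
                 = C0 * exp (s * eta) * exp (p * xi) + exp Y).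
    { rewrite Hs. field. lra. }
    unfold Y in *. lra.
Qed.

Lemma is_derive_eq' (f : R -> R) (x l l' : R) : is_derive f x l -> l = l' -> is_derive f x l'.
Proof. intros H E; subst; exact H. Qed.

Lemma loc_gt (a x : R) : a < x -> locally x (fun y => a < y).
Proof.
  intros H. assert (h : 0 < x - a) by lra. exists (mkposreal _ h). intros y Hy.
  unfold ball in Hy; simpl in Hy; unfold AbsRing_ball, abs, minus, plus, opp in Hy; simpl in Hy.
  apply Rabs_def2 in Hy. lra.
Qed.

Lemma cont_from (f df : R -> R) (a b : R) :
  (forall x, a < x -> is_derive f x (df x)) -> continuity_pt f a ->
  forall x, a <= x <= b -> continuity_pt f x.
Proof.
  intros Hd Ha x [Hx _]. destruct Hx as [Hx|Hx]; [|subst; exact Ha].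
  apply continuity_pt_filterlim. apply (@ex_derive_continuous R_AbsRing R_NormedModule f x). exists (df x). apply Hd; lra.
Qed.

Lemma mono_inc (f df : R -> R) (a b : R) : a <= b ->
  (forall x, a < x < b -> is_derive f x (df x)) ->
  (forall x, a <= x <= b -> continuity_pt f x) ->
  (forall x, a <= x <= b -> 0 <= df x) -> f a <= f b.
Proof.
  intros Hab Hd Hc Hs.
  assert (H := mono_dec (fun x => - f x) (fun x => - df x) a b Hab).
  assert (- f b <= - f a); [|lra].
  apply H.
  - intros x Hx. apply (is_derive_opp f x (df x)). apply Hd; exact Hx.
  - intros x Hx. apply (continuity_pt_opp f x). apply Hc; exact Hx.
  - intros x Hx. specialize (Hs x Hx). lra.
Qed.
Lemma contR (f : R -> R) (x : R) (l : R) : is_derive f x l -> continuous f x.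
Proof. intros H. apply (@ex_derive_continuous R_AbsRing R_NormedModule f x). exists l; exact H. Qed.

Theorem lemma4p1 (C0 C1 p q t0 pstar I : R) (Phi dPhi : R -> R) :
  0 < C0 -> 0 <= C1 -> 1 < p -> 1 < q -> 2 <= t0 ->
  1 / p + 1 / pstar = 1 ->
  (forall t, t0 <= t -> has_deriv_on_ge t0 Phi t (dPhi t)) ->
  (forall t, t0 <= t ->
     dPhi t <= - (C0 / t) * rpow (Rabs (Phi t)) p + C1 / rpow t q) ->
  is_RInt_gen (fun tau => rpow (ln tau) pstar / rpow tau q)
    (at_point 2) (Rbar_locally p_infty) I ->
  forall t, t0 <= t ->
    Phi t <=
      (/ ln 2 * (rpow (ln t0) pstar * Phi t0 + C1 * I)
       + rpow (pstar / (C0 * p)) (pstar - 1))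
      / rpow (ln t) (pstar - 1).
Proof.
  intros HC0 HC1 Hp Hq Ht0 Hs Hder Hineq HI t Ht.
  assert (Hpinv : / p < 1) by (rewrite <- Rinv_1; apply Rinv_lt_contravar; lra).
  assert (Hs0 : pstar <> 0).
  { intro E. rewrite E in Hs. unfold Rdiv in Hs. rewrite Rinv_0 in Hs. lra. }
  assert (Hsp : pstar = p / (p - 1)).
  { assert (h : / pstar = 1 - / p) by (unfold Rdiv in Hs; lra).
    rewrite <- (Rinv_inv pstar), h. field. lra. }
  assert (Hs1 : 1 < pstar).
  { rewrite Hsp. replace (p / (p - 1)) with (1 + 1 / (p - 1)) by (field; lra).
    assert (0 < 1 / (p - 1)) by (apply Rdiv_lt_0_compat; lra). lra. }
  assert (lnpos : forall x, 1 < x -> 0 < ln x).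
  { intros x Hx. rewrite <- ln_1. apply ln_increasing; lra. }
  set (gr := fun tau => rpow (ln tau) pstar / rpow tau q) in HI.
  set (K := rpow (pstar / (C0 * p)) (pstar - 1)).
  assert (gr_eq : forall x, 1 < x -> gr x = exp (pstar * ln (ln x) - q * ln x)).
  { intros x Hx. unfold gr. rewrite (rpow_pos (ln x)) by (apply lnpos; lra).
    rewrite (rpow_pos x) by lra. unfold Rminus. rewrite exp_plus, exp_Ropp. reflexivity. }
  assert (gr_cont : forall x, 1 < x -> continuous gr x).
  { intros x Hx.
    apply (continuous_ext_loc _ (fun y => exp (pstar * ln (ln y) - q * ln y))).
    - eapply filter_imp; [| apply (loc_gt 1 x Hx)]. intros y Hy. simpl. symmetry. apply gr_eq; exact Hy.
    - apply (@ex_derive_continuous R_AbsRing R_NormedModule). auto_derive.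
      split; [lra| split; [apply lnpos; lra| split; [lra| exact Logic.I]]]. }
  assert (gr_nn : forall x, 1 < x -> 0 <= gr x).
  { intros x Hx. rewrite gr_eq by exact Hx. left; apply exp_pos. }
  assert (exR : forall a b, 1 < a -> 1 < b -> ex_RInt gr a b).
  { intros a b Ha Hb. apply (@ex_RInt_continuous R_CompleteNormedModule). intros z [Hz _]. apply gr_cont.
    assert (1 < Rmin a b) by (apply Rmin_glb_lt; lra). lra. }
  assert (Pmono : forall a b c, 1 < a -> a <= b -> b <= c -> RInt gr a b <= RInt gr a c).
  { intros a b c Ha Hab Hbc.
    rewrite <- (RInt_Chasles gr a b c) by (apply exR; lra).
    assert (0 <= RInt gr b c).
    { apply RInt_ge_0; [lra| apply exR; lra|]. intros y Hy. apply gr_nn; lra. }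
    change (plus (RInt gr a b) (RInt gr b c)) with (RInt gr a b + RInt gr b c). lra. }
  assert (RI2 : forall b, 2 <= b -> RInt gr 2 b <= I).
  { intros b Hb. destruct (Rle_or_lt (RInt gr 2 b) I) as [h|h]; [exact h|exfalso].
    assert (He : 0 < (RInt gr 2 b - I) / 2) by lra.
    destruct (HI (ball I (mkposreal _ He)) (locally_ball I (mkposreal _ He))) as [Q R hQ hR hQR].
    destruct hR as [M hM].
    set (c := Rmax b (M + 1)).
    assert (hc1 : M < c) by (unfold c; pose proof (Rmax_r b (M + 1)); lra).
    assert (hc2 : b <= c) by (unfold c; apply Rmax_l).
    destruct (hQR 2 c hQ (hM c hc1)) as [y [hy1 hy2]].
    simpl in hy1. apply (@is_RInt_unique R_CompleteNormedModule) in hy1.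
    assert (RInt gr 2 b <= RInt gr 2 c) by (apply Pmono; lra).
    unfold ball in hy2; simpl in hy2; unfold AbsRing_ball, abs, minus, plus, opp in hy2; simpl in hy2.
    apply Rabs_def2 in hy2. lra. }
  set (P := fun x => RInt gr t0 x).
  assert (Ple : forall x, t0 <= x -> P x <= I).
  { intros x Hx. unfold P.
    assert (e := RInt_Chasles gr 2 t0 x (exR 2 t0 ltac:(lra) ltac:(lra)) (exR t0 x ltac:(lra) ltac:(lra))).
    change (plus (RInt gr 2 t0) (RInt gr t0 x)) with (RInt gr 2 t0 + RInt gr t0 x) in e.
    assert (0 <= RInt gr 2 t0).
    { apply RInt_ge_0; [lra| apply exR; lra|]. intros y Hy. apply gr_nn; lra. }
    pose proof (RI2 x ltac:(lra)). lra. }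
  assert (P0 : P t0 = 0) by (unfold P; rewrite RInt_point; reflexivity).
  assert (Pder : forall x, 1 < x -> is_derive P x (gr x)).
  { intros x Hx. apply (@is_derive_RInt R_NormedModule gr P t0 x).
    - eapply filter_imp; [| apply (loc_gt 1 x Hx)]. intros y Hy. apply (@RInt_correct R_CompleteNormedModule). apply exR; lra.
    - apply gr_cont; exact Hx. }
  set (E := fun x => exp (pstar * ln (ln x))).
  assert (Eder : forall x, 1 < x -> is_derive E x (E x * (pstar * / ln x * / x))).
  { intros x Hx. unfold E. auto_derive.
    - split; [lra| split; [apply lnpos; lra| exact Logic.I]].
    - ring. }
  assert (Epos : forall x, 0 < E x) by (intros x; apply exp_pos).
  assert (E_rpow : forall x, 1 < x -> E x = rpow (ln x) pstar).
  { intros x Hx. rewrite rpow_pos by (apply lnpos; lra). reflexivity. }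
  set (Phe := fun y => Phi (Rmax t0 y)).
  assert (Pheder : forall x, t0 < x -> is_derive Phe x (dPhi x)).
  { intros x Hx. apply deriv_int; [exact Hx| apply Hder; lra]. }
  assert (Phe_eq : forall x, t0 <= x -> Phe x = Phi x).
  { intros x Hx. unfold Phe. rewrite Rmax_right by lra. reflexivity. }
  assert (Phecont : continuous Phe t0).
  { apply continuity_pt_filterlim. apply (cont_t0 t0 Phi (dPhi t0)). apply Hder; lra. }
  assert (Econt : continuous E t0) by (eapply contR; apply Eder; lra).
  assert (Pcont : continuous P t0) by (eapply contR; apply Pder; lra).
  assert (lncont : continuous ln t0) by (eapply contR; apply is_derive_ln; lra).
  set (B := rpow (ln t0) pstar * Phi t0 + C1 * I).
  assert (HB : 0 <= B).
  { destruct (Rle_or_lt 0 B) as [h|hB]; [exact h| exfalso].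
    set (V := fun x => - Phe x + C1 * ((P x - I) * / E x)).
    set (dV := fun x => - dPhi x + C1 * (gr x * / E x + (P x - I) * (- (E x * (pstar * / ln x * / x)) / E x ^ 2))).
    assert (Vder : forall x, t0 < x -> is_derive V x (dV x)).
    { intros x Hx.
      assert (h := is_derive_plus _ _ x _ _ (is_derive_opp _ x _ (Pheder x Hx))
        (is_derive_scal _ x C1 _ (is_derive_mult _ _ x _ _
          (is_derive_minus _ _ x _ _ (Pder x ltac:(lra)) (is_derive_const I x))
          (is_derive_inv E x _ (Eder x ltac:(lra)) (Rgt_not_eq _ _ (Epos x))) Rmult_comm))).
      eapply is_derive_eq'; [exact h|].
      unfold dV, minus, plus, opp, mult, zero; simpl. field. split; [lra| split; [apply Rgt_not_eq, lnpos; lra| apply Rgt_not_eq, Epos]]. }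
    assert (dVge : forall x, t0 <= x -> C0 / x * rpow (Rabs (Phi x)) p <= dV x).
    { intros x Hx. unfold dV.
      assert (hx : 1 < x) by lra.
      assert (hq : 0 < rpow x q) by (rewrite rpow_pos by lra; apply exp_pos).
      assert (e1 : gr x * / E x = / rpow x q).
      { unfold gr. rewrite <- E_rpow by exact hx. field. split; [lra| apply Rgt_not_eq, Epos]. }
      assert (hd : 0 < pstar * / ln x * / x).
      { apply Rmult_lt_0_compat; [apply Rmult_lt_0_compat; [lra| apply Rinv_0_lt_compat, lnpos; lra]| apply Rinv_0_lt_compat; lra]. }
      assert (e2 : (P x - I) * (- (E x * (pstar * / ln x * / x)) / E x ^ 2)
                   = (I - P x) * (pstar * / ln x * / x) * / E x).
      { field. split; [apply Rgt_not_eq, Epos| split; [lra| apply Rgt_not_eq, lnpos; lra]]. }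
      rewrite e1, e2.
      assert (h3 : 0 <= (I - P x) * (pstar * / ln x * / x) * / E x).
      { apply Rmult_le_pos; [apply Rmult_le_pos; [pose proof (Ple x Hx); lra| lra]| left; apply Rinv_0_lt_compat, Epos]. }
      assert (h4 : 0 <= C1 * ((I - P x) * (pstar * / ln x * / x) * / E x)) by (apply Rmult_le_pos; lra).
      pose proof (Hineq x Hx) as hi. unfold Rdiv in hi |- *. lra. }
    assert (Vcont : continuous V t0).
    { apply (continuous_ext (fun x => plus (opp (Phe x)) (mult C1 (mult (minus (P x) I) (/ E x))))).
      { intros x. reflexivity. }
      apply (@continuous_plus R_UniformSpace R_AbsRing R_NormedModule); [apply (@continuous_opp R_UniformSpace R_AbsRing R_NormedModule); exact Phecont|].
      apply (@continuous_mult R_UniformSpace R_AbsRing); [apply continuous_const|].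
      apply (@continuous_mult R_UniformSpace R_AbsRing).
      - apply (@continuous_minus R_UniformSpace R_AbsRing R_NormedModule); [exact Pcont| apply continuous_const].
      - apply continuous_Rinv_comp; [exact Econt| apply Rgt_not_eq, Epos]. }
    assert (Vt0 : 0 < V t0).
    { assert (e : V t0 = - B * / E t0).
      { unfold V, B. rewrite Phe_eq, P0, <- E_rpow by lra. field. apply Rgt_not_eq, Epos. }
      rewrite e. apply Rmult_lt_0_compat; [lra| apply Rinv_0_lt_compat, Epos]. }
    assert (Vge : forall x, t0 <= x -> V t0 <= V x).
    { intros x Hx. apply (mono_inc V dV t0 x Hx).
      - intros y Hy. apply Vder; lra.
      - apply (cont_from V dV). { intros y Hy. apply Vder; lra. }
        apply continuity_pt_filterlim; exact Vcont.
      - intros y Hy. eapply Rle_trans; [| apply dVge; lra].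
        apply Rmult_le_pos; [apply Rdiv_le_0_compat; lra| apply rpow_ge0]. }
    assert (Vpos : forall x, t0 <= x -> 0 < V x) by (intros x Hx; pose proof (Vge x Hx); lra).
    assert (Vle : forall x, t0 <= x -> V x <= - Phi x).
    { intros x Hx. unfold V. rewrite Phe_eq by lra.
      assert (C1 * ((P x - I) * / E x) <= 0); [|lra].
      rewrite <- (Rmult_0_r C1). apply Rmult_le_compat_l; [lra|].
      rewrite <- (Rmult_0_l (/ E x)). apply Rmult_le_compat_r; [left; apply Rinv_0_lt_compat, Epos|].
      pose proof (Ple x Hx); lra. }
    set (G := fun x => exp ((1 - p) * ln (V x)) + (p - 1) * C0 * ln x).
    set (dG := fun x => exp ((1 - p) * ln (V x)) * ((1 - p) * (dV x * / V x)) + (p - 1) * C0 * / x).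
    assert (Gder : forall x, t0 < x -> is_derive G x (dG x)).
    { intros x Hx.
      assert (hl := is_derive_comp ln V x _ _ (is_derive_ln (V x) (Vpos x ltac:(lra))) (Vder x Hx)).
      assert (hs := is_derive_scal _ x (1 - p) _ hl).
      assert (he := is_derive_comp exp _ x _ _ (is_derive_exp ((1 - p) * ln (V x))) hs).
      assert (hln := is_derive_scal _ x ((p - 1) * C0) _ (is_derive_ln x ltac:(lra))).
      assert (h := is_derive_plus _ _ x _ _ he hln).
      eapply is_derive_eq'; [exact h|].
      unfold dG, plus, scal; simpl. unfold mult; simpl. ring. }
    assert (dGle : forall x, t0 <= x -> dG x <= 0).
    { intros x Hx. unfold dG.
      assert (hV := Vpos x Hx). assert (hVl := Vle x Hx).
      assert (hx : 0 < x) by lra.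
      set (Z := exp ((1 - p) * ln (V x))). set (W := exp (p * ln (V x))).
      assert (hZW : Z * W = V x).
      { unfold Z, W. rewrite <- exp_plus. replace ((1 - p) * ln (V x) + p * ln (V x)) with (ln (V x)) by ring.
        apply exp_ln; exact hV. }
      assert (hR : W <= rpow (Rabs (Phi x)) p).
      { rewrite rpow_pos by (apply Rabs_pos_lt; lra). unfold W. apply exp_le_mono.
        apply Rmult_le_compat_l; [lra|]. apply ln_le; [exact hV|].
        rewrite Rabs_left by lra. lra. }
      assert (hdV : C0 / x * W <= dV x).
      { eapply Rle_trans; [| apply dVge; exact Hx]. apply Rmult_le_compat_l; [|exact hR].
        apply Rdiv_le_0_compat; lra. }
      set (k := (1 - p) * / V x * Z).
      assert (hk : k < 0).
      { unfold k. assert (0 < / V x * Z) by (apply Rmult_lt_0_compat; [apply Rinv_0_lt_compat; lra| apply exp_pos]).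
        nra. }
      assert (h1 : k * dV x <= k * (C0 / x * W)) by (apply Rmult_le_compat_neg_l; lra).
      assert (h2 : k * (C0 / x * W) = (1 - p) * C0 * / x).
      { transitivity ((1 - p) * C0 * / x * (Z * W) * / V x); [unfold k, Rdiv; ring|].
        rewrite hZW. field. split; lra. }
      assert (e : Z * ((1 - p) * (dV x * / V x)) = k * dV x) by (unfold k; ring).
      rewrite e. lra. }
    assert (Gcont : continuous G t0).
    { apply (continuous_ext (fun x => plus (exp (scal (1 - p) (ln (V x)))) (mult ((p - 1) * C0) (ln x)))).
      { intros x. reflexivity. }
      apply (@continuous_plus R_UniformSpace R_AbsRing R_NormedModule).
      - apply (continuous_comp (fun x => scal (1 - p) (ln (V x))) exp).
        + apply (@continuous_scal R_UniformSpace R_AbsRing R_NormedModule); [apply continuous_const|].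
          apply (continuous_comp V ln); [exact Vcont|].
          eapply contR; apply is_derive_ln; exact Vt0.
        + eapply contR; apply is_derive_exp.
      - apply (@continuous_mult R_UniformSpace R_AbsRing); [apply continuous_const| exact lncont]. }
    set (M0 := G t0).
    set (T := Rmax t0 (exp (M0 / ((p - 1) * C0)))).
    assert (hT1 : t0 <= T) by apply Rmax_l.
    assert (hT2 : M0 / ((p - 1) * C0) <= ln T).
    { rewrite <- (ln_exp (M0 / ((p - 1) * C0))) at 1. apply ln_le; [apply exp_pos| apply Rmax_r]. }
    assert (hGT : G T <= G t0).
    { apply (mono_dec G dG t0 T hT1).
      - intros y Hy. apply Gder; lra.
      - apply (cont_from G dG). { intros y Hy. apply Gder; lra. }
        apply continuity_pt_filterlim; exact Gcont.
      - intros y Hy. apply dGle; lra. }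
    unfold G in hGT. fold M0 in hGT.
    pose proof (exp_pos ((1 - p) * ln (V T))).
    assert (hpc : 0 < (p - 1) * C0) by (apply Rmult_lt_0_compat; lra).
    assert (M0 <= (p - 1) * C0 * ln T).
    { apply (Rmult_le_compat_l ((p - 1) * C0)) in hT2; [|lra].
      replace ((p - 1) * C0 * (M0 / ((p - 1) * C0))) with M0 in hT2 by (field; lra). exact hT2. }
    unfold M0, G in *. lra. }
  set (U := fun x => E x * Phe x - C1 * P x - K * ln x).
  set (dU := fun x => E x * (pstar * / ln x * / x) * Phe x + E x * dPhi x - C1 * gr x - K * / x).
  assert (Uder : forall x, t0 < x -> is_derive U x (dU x)).
  { intros x Hx.
    assert (hEP := is_derive_mult E Phe x _ _ (Eder x ltac:(lra)) (Pheder x Hx) Rmult_comm).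
    assert (hCP := is_derive_scal P x C1 _ (Pder x ltac:(lra))).
    assert (hKl := is_derive_scal ln x K _ (is_derive_ln x ltac:(lra))).
    assert (h := is_derive_minus _ _ x _ _ (is_derive_minus _ _ x _ _ hEP hCP) hKl).
    eapply is_derive_eq'; [exact h|].
    unfold dU, minus, plus, opp, mult; simpl. ring. }
  assert (dUle : forall x, t0 <= x -> dU x <= 0).
  { intros x Hx. unfold dU. rewrite Phe_eq by lra.
    assert (hx : 1 < x) by lra.
    assert (hq : 0 < rpow x q) by (rewrite rpow_pos by lra; apply exp_pos).
    pose proof (young C0 p pstar (ln x) (Phi x) HC0 Hp Hsp (lnpos x hx)) as hY.
    fold K in hY. change (exp (pstar * ln (ln x))) with (E x) in hY.
    assert (hg : gr x = E x * / rpow x q) by (unfold gr; rewrite <- E_rpow by exact hx; reflexivity).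
    assert (h1 : E x * dPhi x <= E x * (- (C0 / x) * rpow (Rabs (Phi x)) p + C1 / rpow x q)).
    { apply Rmult_le_compat_l; [left; apply Epos| apply Hineq; exact Hx]. }
    set (A := pstar * E x * / ln x * Phi x - C0 * E x * rpow (Rabs (Phi x)) p - K).
    assert (hA : A <= 0) by (unfold A; lra).
    assert (h2 : A * / x <= 0).
    { rewrite <- (Rmult_0_l (/ x)). apply Rmult_le_compat_r; [left; apply Rinv_0_lt_compat; lra| exact hA]. }
    assert (e : E x * (pstar * / ln x * / x) * Phi x
                + E x * (- (C0 / x) * rpow (Rabs (Phi x)) p + C1 / rpow x q)
                - C1 * (E x * / rpow x q) - K * / x = A * / x) by (unfold A, Rdiv; ring).
    rewrite hg. lra. }
  assert (Ucont : continuous U t0).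
  { apply (continuous_ext (fun x => minus (minus (mult (E x) (Phe x)) (mult C1 (P x))) (mult K (ln x)))).
    { intros x. reflexivity. }
    apply (@continuous_minus R_UniformSpace R_AbsRing R_NormedModule); [apply (@continuous_minus R_UniformSpace R_AbsRing R_NormedModule)|].
    - apply (@continuous_mult R_UniformSpace R_AbsRing); [exact Econt| exact Phecont].
    - apply (@continuous_mult R_UniformSpace R_AbsRing); [apply continuous_const| exact Pcont].
    - apply (@continuous_mult R_UniformSpace R_AbsRing); [apply continuous_const| exact lncont]. }
  assert (hU : U t <= U t0).
  { apply (mono_dec U dU t0 t Ht).
    - intros y Hy. apply Uder; lra.
    - apply (cont_from U dU). { intros y Hy. apply Uder; lra. }
      apply continuity_pt_filterlim; exact Ucont.
    - intros y Hy. apply dUle; lra. }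
  unfold U in hU. rewrite P0, !Phe_eq in hU by lra.
  rewrite (E_rpow t0) in hU by lra.
  fold B K.
  assert (hu : ln 2 <= ln t) by (apply ln_le; lra).
  assert (hl2 : 0 < ln 2) by (apply lnpos; lra).
  set (u := ln t) in *.
  assert (hK : 0 <= K) by apply rpow_ge0.
  assert (hKt0 : 0 <= K * ln t0) by (apply Rmult_le_pos; [lra| left; apply lnpos; lra]).
  assert (hCP : C1 * P t <= C1 * I) by (apply Rmult_le_compat_l; [lra| apply Ple; lra]).
  assert (hEt : E t * Phi t <= B + K * u) by (unfold B; lra).
  assert (hQ : 0 < rpow u (pstar - 1)) by (rewrite rpow_pos by lra; apply exp_pos).
  assert (hEQ : E t = rpow u (pstar - 1) * u).
  { unfold E. fold u. rewrite rpow_pos by lra.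
    replace (pstar * ln u) with ((pstar - 1) * ln u + ln u) by ring.
    rewrite exp_plus, exp_ln by lra. reflexivity. }
  set (Q := rpow u (pstar - 1)) in *.
  assert (hBu : B <= / ln 2 * B * u).
  { assert (0 <= B * ((u - ln 2) * / ln 2)).
    { apply Rmult_le_pos; [exact HB| apply Rmult_le_pos; [lra| left; apply Rinv_0_lt_compat; lra]]. }
    assert (e : B * ((u - ln 2) * / ln 2) = / ln 2 * B * u - B) by (field; lra).
    lra. }
  assert (hmain : Phi t * Q * u <= (/ ln 2 * B + K) * u).
  { rewrite hEQ in hEt. lra. }
  apply Rmult_le_reg_r in hmain; [|lra].
  apply (Rmult_le_reg_r Q); [exact hQ|].
  replace ((/ ln 2 * B + K) / Q * Q) with (/ ln 2 * B + K) by (field; lra).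
  exact hmain.
Qed.
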